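(* Let $I\in\mathcal I$ and let $(c_m)_m$ be a sequence in $N$. Then there exist a subsequence $(c_k)_k$ and elements $\gamma_k\in\Gamma_I$, $b_k\in N$ such that $c_k=\gamma_k b_k$ for every $k$ and the sequence $(b_k)$ converges to an element $b\in N$ (in the topology of $N\subset T^d$).
   Context: Let $\mathfrak d$ be an $n$-dimensional real vector space. A quasilattice in $\mathfrak d$ is the $\mathbb Z$-submodule generated by a finite set of vectors spanning $\mathfrak d$. Let $\Delta\subset\mathfrak d^*$ be an $n$-dimensional convex polytope with $d$ facets, $\Delta=\bigcap_{j=1}^d\{\mu:\langle\mu,X_j\rangle\ge\lambda_j\}$, with chosen inward normals $X_1,\dots,X_d\in\mathfrak d$, and let $Q$ be a quasilattice containing the $X_j$. For each face $F$ let $I_F=\{j:\langle\mu,X_j\rangle=\lambda_j \text{ on } F\}$. Let $\pi:\mathbb R^d\to\mathfrak d$, $e_j\mapsto X_j$; $T^d=\mathbb R^d/\mathbb Z^d$ with projection $\exp$; $N=\ker(T^d\to\mathfrak d/Q)$ (induced by $\pi$). For $J\subseteq\{1,\dots,d\}$, $T^J=\exp(\mathbb R^J)$ where $\mathbb R^J$ is spanned by $e_j$, $j\in J$. $\mathcal I$ is the set of subsets $I$ such that $\{X_j:j\in I\}$ is a basis of $\mathfrak d$ and $I\subseteq I_\mu$ for some vertex $\mu$ of $\Delta$; $\Gamma_I=N\cap T^I$. *)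

(* Defs.v *)
From Stdlib Require Import Reals ZArith.
Open Scope R_scope.

(* Vectors of R^k are represented as functions nat -> R; only the
   coordinates 0..k-1 are meaningful. *)

Fixpoint rsum (k : nat) (f : nat -> R) : R :=
  match k with
  | O => 0
  | S k' => rsum k' f + f k'
  end.

(* pairing <mu, x> of mu in d^* with x in d = R^n *)
Definition pair (n : nat) (mu x : nat -> R) : R := rsum n (fun i => mu i * x i).

Definition in_Delta (n d : nat) (X : nat -> nat -> R) (lam : nat -> R)
  (mu : nat -> R) : Prop :=
  forall j, (j < d)%nat -> pair n mu (X j) >= lam j.

Definition is_polytope_with_facets (n d : nat) (X : nat -> nat -> R)
  (lam : nat -> R) : Prop :=
  (exists M, forall mu, in_Delta n d X lam mu -> forall i, (i < n)%nat -> Rabs (mu i) <= M)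
  (* n-dimensional: nonempty interior *)
  /\ (exists mu0, forall j, (j < d)%nat -> pair n mu0 (X j) > lam j)
  (* each inequality j defines a facet, distinct from the others: some point of
     Delta saturates exactly the j-th inequality *)
  /\ (forall j, (j < d)%nat -> exists mu, in_Delta n d X lam mu /\
        pair n mu (X j) = lam j /\
        forall k, (k < d)%nat -> k <> j -> pair n mu (X k) > lam k).

Definition is_vertex (n d : nat) (X : nat -> nat -> R) (lam : nat -> R)
  (mu : nat -> R) : Prop :=
  in_Delta n d X lam mu /\
  forall a b t, in_Delta n d X lam a -> in_Delta n d X lam b -> 0 < t < 1 ->
    (forall i, (i < n)%nat -> mu i = t * a i + (1 - t) * b i) ->
    forall i, (i < n)%nat -> a i = b i.

Definition in_Q (n m : nat) (gens : nat -> nat -> R) (v : nat -> R) : Prop :=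
  exists k : nat -> Z, forall i, (i < n)%nat ->
    v i = rsum m (fun l => IZR (k l) * gens l i).

Definition spans (n m : nat) (gens : nat -> nat -> R) : Prop :=
  forall w : nat -> R, exists a : nat -> R, forall i, (i < n)%nat ->
    w i = rsum m (fun l => a l * gens l i).

Definition piX (n d : nat) (X : nat -> nat -> R) (t : nat -> R) : nat -> R :=
  fun i => rsum d (fun j => t j * X j i).

Definition is_basis_family (n d : nat) (X : nat -> nat -> R) (I : nat -> bool) : Prop :=
  (forall a : nat -> R,
     (forall i, (i < n)%nat -> rsum d (fun j => if I j then a j * X j i else 0) = 0) ->
     forall j, (j < d)%nat -> I j = true -> a j = 0)
  /\ (forall w : nat -> R, exists a : nat -> R, forall i, (i < n)%nat ->
        w i = rsum d (fun j => if I j then a j * X j i else 0)).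

Definition in_calI (n d : nat) (X : nat -> nat -> R) (lam : nat -> R)
  (I : nat -> bool) : Prop :=
  (forall j, I j = true -> (j < d)%nat) /\
  is_basis_family n d X I /\
  exists mu, is_vertex n d X lam mu /\
    forall j, (j < d)%nat -> I j = true -> pair n mu (X j) = lam j.

(* Torus T^d = R^d / Z^d: points are given by representatives t : nat -> R. *)
Definition torus_eq (d : nat) (s t : nat -> R) : Prop :=
  exists z : nat -> Z, forall j, (j < d)%nat -> s j = t j + IZR (z j).

Definition vadd (s t : nat -> R) : nat -> R := fun j => s j + t j.

(* exp(t) in N = ker(T^d -> d/Q) *)
Definition in_N (n d m : nat) (X : nat -> nat -> R) (gens : nat -> nat -> R)
  (t : nat -> R) : Prop :=
  in_Q n m gens (piX n d X t).

(* exp(g) in T^I = exp(R^I) *)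
Definition in_TI (d : nat) (I : nat -> bool) (g : nat -> R) : Prop :=
  exists s : nat -> R, (forall j, (j < d)%nat -> I j = false -> s j = 0) /\
    torus_eq d g s.

Definition in_Gamma (n d m : nat) (X : nat -> nat -> R) (gens : nat -> nat -> R)
  (I : nat -> bool) (g : nat -> R) : Prop :=
  in_N n d m X gens g /\ in_TI d I g.

Definition torus_conv (d : nat) (b : nat -> nat -> R) (bl : nat -> R) : Prop :=
  forall eps, eps > 0 -> exists K, forall k, (k >= K)%nat ->
    exists z : nat -> Z, forall j, (j < d)%nat -> Rabs (b k j - bl j - IZR (z j)) < eps.

(* Main.v *)
Require Import Defs.
From Stdlib Require Import Reals ZArith Lra Lia Rtopology ClassicalEpsilon.
Open Scope R_scope.

Definition incr (p : nat -> nat) := forall k, (p k < p (S k))%nat.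

Lemma incr_mono p : incr p -> forall i j, (i < j)%nat -> (p i < p j)%nat.
Proof. intros H i j Hij; induction Hij; [apply H| specialize (H m); lia]. Qed.

Lemma incr_ge p : incr p -> forall k, (k <= p k)%nat.
Proof. intros H k; induction k; [lia| specialize (H k); lia]. Qed.

Lemma sub1 (u : nat -> R) : (forall k, 0 <= u k <= 1) ->
  exists psi a, incr psi /\ forall eps, eps > 0 -> exists K, forall k, (k >= K)%nat ->
    Rabs (u (psi k) - a) < eps.
Proof.
  intros Hu.
  destruct (Bolzano_Weierstrass u (fun c => 0 <= c <= 1) (compact_P3 0 1) Hu) as [l Hl].
  assert (Hg : forall N e : nat, {p | (N <= p)%nat /\ Rabs (u p - l) < / (INR e + 1)}).
  { intros N e. apply constructive_indefinite_description.
    assert (Hpos : 0 < / (INR e + 1)).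
    { apply Rinv_0_lt_compat. pose proof (pos_INR e); lra. }
    destruct (Hl (disc l (mkposreal _ Hpos)) N) as [p [Hp1 Hp2]].
    - exists (mkposreal _ Hpos). intros y Hy; exact Hy.
    - exists p; split; [exact Hp1| exact Hp2]. }
  set (g := fun N e => proj1_sig (Hg N e)).
  set (psi := fix f (k : nat) : nat := match k with O => g O O | S k' => g (S (f k')) k end).
  exists psi, l. split.
  - intro k. simpl. destruct (proj2_sig (Hg (S (psi k)) (S k))) as [H1 _]. unfold g. lia.
  - intros eps Heps. destruct (archimed_cor1 eps Heps) as [N [HN1 HN2]].
    exists N. intros k Hk.
    assert (Hb : Rabs (u (psi k) - l) < / (INR k + 1)).
    { destruct k; simpl; [exact (proj2 (proj2_sig (Hg O O)))|].
      exact (proj2 (proj2_sig (Hg (S (psi k)) (S k)))). }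
    eapply Rlt_le_trans; [exact Hb|].
    apply Rlt_le. eapply Rle_lt_trans; [|exact HN1].
    apply Rinv_le_contravar. apply lt_0_INR; lia.
    apply le_INR in Hk. lra.
Qed.
Lemma BWd (d : nat) (u : nat -> nat -> R) : (forall k j, 0 <= u k j <= 1) ->
  exists phi F, incr phi /\ forall eps, eps > 0 -> exists K, forall k, (k >= K)%nat ->
    forall j, (j < d)%nat -> Rabs (u (phi k) j - F j) < eps.
Proof.
  intros Hu. induction d as [|d IH].
  - exists (fun k => k), (fun _ => 0). split; [intro k; lia|].
    intros eps _; exists O; intros; lia.
  - destruct IH as [phi [F [Hphi HF]]].
    destruct (sub1 (fun k => u (phi k) d) (fun k => Hu _ _)) as [psi [a [Hpsi Ha]]].
    exists (fun k => phi (psi k)), (fun j => if Nat.eqb j d then a else F j).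
    split.
    + intro k. apply incr_mono; [exact Hphi| apply Hpsi].
    + intros eps Heps. destruct (HF eps Heps) as [K1 HK1]. destruct (Ha eps Heps) as [K2 HK2].
      exists (max K1 K2). intros k Hk j Hj.
      destruct (Nat.eqb_spec j d) as [->|Hne].
      * apply HK2. lia.
      * apply HK1; [|lia]. pose proof (incr_ge psi Hpsi k). lia.
Qed.

Lemma rsum_ext k f g : (forall i, (i < k)%nat -> f i = g i) -> rsum k f = rsum k g.
Proof. induction k; simpl; intros H; auto. rewrite IHk by (intros; apply H; lia). rewrite H by lia. auto. Qed.
Lemma rsum_add k f g : rsum k (fun i => f i + g i) = rsum k f + rsum k g.
Proof. induction k; simpl; [ring| rewrite IHk; ring]. Qed.
Lemma rsum_sub k f g : rsum k (fun i => f i - g i) = rsum k f - rsum k g.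
Proof. induction k; simpl; [ring| rewrite IHk; ring]. Qed.
Lemma rsum_mull k c f : rsum k (fun i => c * f i) = c * rsum k f.
Proof. induction k; simpl; [ring| rewrite IHk; ring]. Qed.
Lemma rsum_mulr k c f : rsum k (fun i => f i * c) = rsum k f * c.
Proof. induction k; simpl; [ring| rewrite IHk; ring]. Qed.
Lemma rsum_0 k : rsum k (fun _ => 0) = 0.
Proof. induction k; simpl; [ring| rewrite IHk; ring]. Qed.
Lemma rsum_swap a b (F : nat -> nat -> R) :
  rsum a (fun x => rsum b (fun y => F x y)) = rsum b (fun y => rsum a (fun x => F x y)).
Proof. induction a; simpl. - symmetry; apply rsum_0. - rewrite IHa, <- rsum_add; auto. Qed.
Lemma rsum_abs k f : Rabs (rsum k f) <= rsum k (fun i => Rabs (f i)).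
Proof. induction k; simpl. - rewrite Rabs_R0; lra. - eapply Rle_trans; [apply Rabs_triang|]. lra. Qed.
Lemma rsum_le k f g : (forall i, (i < k)%nat -> f i <= g i) -> rsum k f <= rsum k g.
Proof. induction k; simpl; intros H; [lra|]. pose proof (H k ltac:(lia)). pose proof (IHk ltac:(intros; apply H; lia)). lra. Qed.
Lemma rsum_nonneg k f : (forall i, (i < k)%nat -> 0 <= f i) -> 0 <= rsum k f.
Proof. intros H. rewrite <- (rsum_0 k). apply rsum_le; auto. Qed.
Lemma rsum_term k f j : (forall i, (i < k)%nat -> 0 <= f i) -> (j < k)%nat -> f j <= rsum k f.
Proof.
  induction k; simpl; intros H Hj; [lia|].
  destruct (Nat.eq_dec j k) as [->|Hne].
  - pose proof (rsum_nonneg k f ltac:(intros; apply H; lia)). lra.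
  - pose proof (IHk ltac:(intros; apply H; lia) ltac:(lia)). pose proof (H k ltac:(lia)). lra.
Qed.

Lemma piX_sub n d X x y i : piX n d X (fun l => x l - y l) i = piX n d X x i - piX n d X y i.
Proof. unfold piX. rewrite <- rsum_sub. apply rsum_ext; intros; ring. Qed.

Theorem mainTheorem2
  (n d m : nat) (X : nat -> nat -> R) (lam : nat -> R) (gens : nat -> nat -> R)
  (hDelta : is_polytope_with_facets n d X lam)
  (hQspan : spans n m gens)
  (hXQ : forall j, (j < d)%nat -> in_Q n m gens (X j))
  (I : nat -> bool) (hI : in_calI n d X lam I)
  (c : nat -> nat -> R) (hc : forall k, in_N n d m X gens (c k)) :
  exists (phi : nat -> nat) (gam b : nat -> nat -> R) (bl : nat -> R),
    (forall k, (phi k < phi (S k))%nat) /\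
    (forall k, in_Gamma n d m X gens I (gam k)) /\
    (forall k, in_N n d m X gens (b k)) /\
    (forall k, torus_eq d (c (phi k)) (vadd (gam k) (b k))) /\
    in_N n d m X gens bl /\
    torus_conv d b bl.
Proof.
  destruct hI as [_ [[_ hspan] _]].
  assert (hb : forall l, {a : nat -> R | forall i, (i < n)%nat ->
     X l i = rsum d (fun j => if I j then a j * X j i else 0)}).
  { intro l. apply constructive_indefinite_description. apply hspan. }
  set (beta := fun l => proj1_sig (hb l)).
  assert (Hbeta : forall l i, (i < n)%nat ->
     X l i = rsum d (fun j => if I j then beta l j * X j i else 0)).
  { intros l i Hi. exact (proj2_sig (hb l) i Hi). }
  clearbody beta. clear hb.
  set (alph := fun (f : nat -> R) j => rsum d (fun l => f l * beta l j)).
  set (Bf := fun (f : nat -> R) l => f l - (if I l then alph f l else 0)).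
  assert (piB : forall f i, (i < n)%nat -> piX n d X (Bf f) i = 0).
  { intros f i Hi. unfold piX, Bf.
    rewrite (rsum_ext d _ (fun l => f l * X l i - (if I l then alph f l else 0) * X l i))
      by (intros; ring).
    rewrite rsum_sub.
    rewrite (rsum_ext d (fun l => f l * X l i)
      (fun l => rsum d (fun j => if I j then f l * beta l j * X j i else 0))).
    2:{ intros l Hl. rewrite (Hbeta l i Hi), <- rsum_mull. apply rsum_ext; intros j _.
        destruct (I j); ring. }
    rewrite rsum_swap.
    rewrite <- rsum_sub. rewrite <- (rsum_0 d). apply rsum_ext; intros j _.
    unfold alph. destruct (I j).
    - rewrite <- rsum_mulr. rewrite <- rsum_sub, <- (rsum_0 d). apply rsum_ext; intros; ring.
    - rewrite !rsum_0. ring. }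
  set (fr := fun k l => frac_part (c k l)).
  destruct (BWd d fr) as [phi [F [Hphi HF]]].
  { intros k j. unfold fr. pose proof (base_fp (c k j)). lra. }
  exists phi, (fun k l => c (phi k) l - Bf (fr (phi k)) l), (fun k => Bf (fr (phi k))), (Bf F).
  split; [exact Hphi|]. split; [|split; [|split; [|split]]].
  - intro k. split.
    + destruct (hc (phi k)) as [zz Hzz]. exists zz. intros i Hi.
      rewrite piX_sub, piB, <- Hzz by exact Hi. ring.
    + exists (fun l => if I l then c (phi k) l - Bf (fr (phi k)) l else 0). split.
      * intros j _ Hj. rewrite Hj. reflexivity.
      * exists (fun l => if I l then 0%Z else Int_part (c (phi k) l)). intros j _.
        destruct (I j) eqn:Ej; [simpl; ring|].
        unfold Bf, fr, frac_part. rewrite Ej. ring.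
  - intro k. exists (fun _ => 0%Z). intros i Hi. rewrite piB by exact Hi.
    rewrite (rsum_ext m _ (fun _ => 0)) by (intros; simpl; ring). symmetry; apply rsum_0.
  - intro k. exists (fun _ => 0%Z). intros j _. unfold vadd. simpl. ring.
  - exists (fun _ => 0%Z). intros i Hi. rewrite piB by exact Hi.
    rewrite (rsum_ext m _ (fun _ => 0)) by (intros; simpl; ring). symmetry; apply rsum_0.
  - intros eps Heps.
    set (M := rsum d (fun j => rsum d (fun l => Rabs (beta l j)))).
    assert (HM : 0 <= M).
    { apply rsum_nonneg; intros; apply rsum_nonneg; intros; apply Rabs_pos. }
    assert (He : eps / (1 + M) > 0) by (apply Rdiv_lt_0_compat; lra).
    destruct (HF _ He) as [K HK]. exists K. intros k Hk. exists (fun _ => 0%Z).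
    intros j Hj. simpl.
    assert (E1 : Rabs (fr (phi k) j - F j) < eps / (1 + M)) by (apply HK; auto).
    assert (E2 : Rabs (alph (fr (phi k)) j - alph F j) <= eps / (1 + M) * M).
    { unfold alph. rewrite <- rsum_sub.
      rewrite (rsum_ext d _ (fun l => (fr (phi k) l - F l) * beta l j)) by (intros; ring).
      eapply Rle_trans; [apply rsum_abs|].
      apply Rle_trans with (rsum d (fun l => eps / (1 + M) * Rabs (beta l j))).
      - apply rsum_le; intros l Hl. rewrite Rabs_mult. apply Rmult_le_compat_r; [apply Rabs_pos|].
        apply Rlt_le, HK; auto.
      - rewrite rsum_mull. apply Rmult_le_compat_l; [lra|].
        unfold M. apply (rsum_term d (fun j0 => rsum d (fun l => Rabs (beta l j0)))); auto.
        intros; apply rsum_nonneg; intros; apply Rabs_pos. }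
    assert (Eq : eps / (1 + M) + eps / (1 + M) * M = eps) by (field; lra).
    unfold Bf. destruct (I j).
    + replace (fr (phi k) j - alph (fr (phi k)) j - (F j - alph F j) - 0)
        with ((fr (phi k) j - F j) - (alph (fr (phi k)) j - alph F j)) by ring.
      eapply Rle_lt_trans; [apply Rabs_triang|]. rewrite Rabs_Ropp.
      pose proof (Rmult_le_pos _ _ (Rlt_le _ _ He) HM). lra.
    + replace (fr (phi k) j - 0 - (F j - 0) - 0) with (fr (phi k) j - F j) by ring.
      pose proof (Rmult_le_pos _ _ (Rlt_le _ _ He) HM). lra.
Qed.
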